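(* For every two natural numbers $a,b$ with $3\le a\le b$, there exists a finite, simple, connected graph $G$ such that $\dim_{wt}(G)=a$ and $res_{wt}(G)=b$.
   Context: $d(x,y)$ is the shortest-path distance. A set $W\subseteq V(G)$ is a resolving set if for every two distinct vertices $y,z$ there is $x\in W$ with $d(y,x)\ne d(z,x)$. A set $W$ is a weak total resolving set (WTR-set) if $W$ is resolving and, for every $w\in W$ and every $x\in V(G)\setminus W$, there is $w'\in W\setminus\{w\}$ with $d(x,w')\ne d(w,w')$. $\dim_{wt}(G)$ is the minimum cardinality of a WTR-set. The weak total resolving number $res_{wt}(G)$ is the minimum positive integer $r$ such that every set of $r$ vertices of $G$ is a WTR-set for $G$. *)

(* Defs.v *)
From mathcomp Require Import all_boot.
Set Implicit Arguments. Unset Strict Implicit. Unset Printing Implicit Defensive.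

Definition simple_graph (T : finType) (e : rel T) : Prop :=
  symmetric e /\ irreflexive e.

Definition connected_graph (T : finType) (e : rel T) : Prop :=
  forall x y : T, connect e x y.

Fixpoint ball (T : finType) (e : rel T) (x : T) (n : nat) : {set T} :=
  match n with
  | 0 => [set x]
  | n'.+1 => ball e x n' :|: [set z | [exists y in ball e x n', e y z]]
  end.

(* shortest-path distance: least n with y in ball x n (in a connected graph
   this is < #|T|, so the search range iota 0 #|T| suffices) *)
Definition dist (T : finType) (e : rel T) (x y : T) : nat :=
  find (fun n => y \in ball e x n) (iota 0 #|T|).

Definition resolving (T : finType) (e : rel T) (W : {set T}) : Prop :=
  forall y z : T, y != z -> exists2 x, x \in W & dist e y x != dist e z x.

Definition WTR_set (T : finType) (e : rel T) (W : {set T}) : Prop :=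
  resolving e W /\
  forall w x, w \in W -> x \notin W ->
    exists2 w', w' \in W :\ w & dist e x w' != dist e w w'.

Definition wt_dim_eq (T : finType) (e : rel T) (k : nat) : Prop :=
  (exists W : {set T}, WTR_set e W /\ #|W| = k) /\
  (forall W : {set T}, WTR_set e W -> k <= #|W|).

Definition all_r_sets_WTR (T : finType) (e : rel T) (r : nat) : Prop :=
  forall W : {set T}, #|W| = r -> WTR_set e W.

Definition wt_res_eq (T : finType) (e : rel T) (k : nat) : Prop :=
  0 < k /\ all_r_sets_WTR e k /\
  (forall r, 0 < r -> r < k -> ~ all_r_sets_WTR e r).

(* Main.v *)
Require Import Defs.
From mathcomp Require Import all_boot.
From mathcomp Require Import zify.
Set Implicit Arguments. Unset Strict Implicit. Unset Printing Implicit Defensive.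

Lemma ball_D (T : finType) (e : rel T) (D : T -> T -> nat) :
  (forall x y, (D x y == 0) = (x == y)) ->
  (forall x y z, e y z -> D x z <= (D x y).+1) ->
  (forall x z, 0 < D x z -> exists2 y, e y z & D x y < D x z) ->
  forall x n, ball e x n = [set y | D x y <= n].
Proof.
move=> D0 D1 D2 x; elim=> [|n IH] /=.
  by apply/setP=> y; rewrite !inE leqn0 D0 eq_sym.
apply/setP=> z; rewrite !inE IH !inE.
apply/idP/idP.
- case/orP=> [H|]; first by apply: leqW.
  case/existsP=> y; rewrite inE => /andP[Hy Hyz].
  exact: leq_trans (D1 _ _ _ Hyz) _.
- rewrite leq_eqVlt ltnS; case/orP=> [/eqP Hz|->]; last by [].
  have [y Hy Hlt] := D2 x z ltac:(by rewrite Hz).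
  apply/orP; right; apply/existsP; exists y; rewrite inE Hy andbT.
  by rewrite -ltnS -Hz.
Qed.

Lemma find_iota_le m N : m < N -> find (fun n => m <= n) (iota 0 N) = m.
Proof.
move=> mN.
have hP : has (fun n => m <= n) (iota 0 N).
  by apply/hasP; exists m; rewrite ?mem_iota ?leqnn.
have ilt : find (fun n => m <= n) (iota 0 N) < N.
  by rewrite -{2}(size_iota 0 N) -has_find.
have := nth_find 0 hP; rewrite nth_iota // add0n => mi.
apply/eqP; rewrite eqn_leq mi andbT leqNgt; apply/negP => im.
have := before_find 0 im; rewrite nth_iota // add0n leqnn //.
Qed.

Lemma ball_connect (T : finType) (e : rel T) x n y : y \in ball e x n -> connect e x y.
Proof.
elim: n y => [|n IH] y /=; first by rewrite inE => /eqP->; exact: connect0.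
rewrite !inE => /orP[/IH //|/existsP[z /andP[Hz Hzy]]].
exact: connect_trans (IH _ Hz) (connect1 Hzy).
Qed.

Lemma D_facts (T : finType) (e : rel T) (D : T -> T -> nat) :
  (forall x y, (D x y == 0) = (x == y)) ->
  (forall x y z, e y z -> D x z <= (D x y).+1) ->
  (forall x z, 0 < D x z -> exists2 y, e y z & D x y < D x z) ->
  (forall x y, D x y < #|T|) ->
  connected_graph e /\ (forall x y, dist e x y = D x y).
Proof.
move=> D0 D1 D2 Dlt; split.
  move=> x y; apply: (@ball_connect _ _ x (D x y)).
  by rewrite (ball_D D0 D1 D2) inE.
move=> x y; rewrite /dist.
rewrite (@eq_find _ _ (fun n => D x y <= n)); first exact: find_iota_le.
by move=> n; rewrite (ball_D D0 D1 D2) inE.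
Qed.

Lemma twins_sub (T : finType) (e : rel T) (C W : {set T}) :
  (forall c c' y, c \in C -> c' \in C -> y != c -> y != c' -> dist e c y = dist e c' y) ->
  (forall c, c \in C -> exists2 c', c' \in C & c' != c) ->
  WTR_set e W -> C \subset W.
Proof.
move=> Htw Hnt [Hres Hcond]; apply/subsetP=> c cC; apply/negPn/negP=> cW.
have [c' c'C c'c] := Hnt c cC.
case: (boolP (c' \in W)) => c'W.
- have [w'] := Hcond c' c c'W cW.
  rewrite !inE => /andP[w'c' w'W]; apply/negP; rewrite negbK.
  have w'c : w' != c by apply: contraNneq cW => <-.
  by rewrite (Htw c c' w').
- have [x xW] := Hres c c' ltac:(by rewrite eq_sym).
  apply/negP; rewrite negbK.
  rewrite (Htw c c' x) //; [apply: contraNneq cW => <- // | apply: contraNneq c'W => <- //].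
Qed.

Lemma exists_subset_card (T : finType) (A : {set T}) k :
  k <= #|A| -> exists2 B : {set T}, B \subset A & #|B| = k.
Proof.
elim: k => [|k IH] Hk; first by exists set0; rewrite ?sub0set ?cards0.
have [B BA cB] := IH (ltnW Hk).
have : 0 < #|A :\: B| by rewrite cardsD (setIidPr BA) cB subn_gt0.
case/card_gt0P=> x; rewrite inE => /andP[xB xA].
exists (x |: B); first by rewrite subUset sub1set xA BA.
by rewrite cardsU1 xB cB.
Qed.

Lemma setT_WTR (T : finType) (e : rel T) :
  (forall x y, (dist e x y == 0) = (x == y)) -> WTR_set e setT.
Proof.
move=> Hd0; split.
- move=> y z yz; exists y; first by rewrite inE.
  have h1 := Hd0 y y; have h2 := Hd0 z y; rewrite eqxx in h1.
  move/eqP: h1 => ->; rewrite eq_sym h2; by rewrite eq_sym.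
- by move=> w x _; rewrite inE.
Qed.

Lemma res_twins (T : finType) (e : rel T) t1 t2 :
  t1 != t2 ->
  (forall y, y != t1 -> y != t2 -> dist e t1 y = dist e t2 y) ->
  (forall x y, (dist e x y == 0) = (x == y)) ->
  wt_res_eq e #|T|.
Proof.
move=> t12 Htw Hd0; split; [|split].
- by apply/card_gt0P; exists t1.
- move=> W cW.
  have -> : W = setT by apply/eqP; rewrite eqEcard subsetT cardsT cW leqnn.
  exact: setT_WTR.
- move=> r r0 rT Hall.
  have h1 := cardsD1 t1 setT; have h2 := cardsD1 t2 (setT :\ t1).
  rewrite !inE eq_sym t12 /= cardsT in h1 h2.
  have [B BA cB] := @exists_subset_card _ (setT :\ t1 :\ t2) r.-1 ltac:(lia).
  have t1B : t1 \notin B by apply/negP => /(subsetP BA); rewrite !inE eqxx andbF.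
  have [_ Hcond] := Hall (t1 |: B) ltac:(rewrite cardsU1 t1B cB; lia).
  have t2W : t2 \notin t1 |: B.
    rewrite !inE negb_or eq_sym t12 /=; apply/negP => /(subsetP BA).
    by rewrite !inE eqxx.
  have [w'] := Hcond t1 t2 ltac:(by rewrite !inE eqxx) t2W.
  rewrite !inE => /andP[w't1 /orP[/eqP w't1' | w'B]]; first by rewrite w't1' eqxx in w't1.
  have := subsetP BA _ w'B; rewrite !inE => /andP[w't2 _].
  by rewrite (Htw w') ?eqxx.
Qed.

Lemma complete_ok n : exists (T : finType) (e : rel T),
  simple_graph e /\ connected_graph e /\ wt_dim_eq e n.+3 /\ wt_res_eq e n.+3.
Proof.
pose T := 'I_n.+3.
pose e : rel T := fun x y => x != y.
pose D : T -> T -> nat := fun x y => x != y.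
have D0 : forall x y, (D x y == 0) = (x == y) by move=> x y; rewrite /D; case: (x =P y).
have D1 : forall x y z, e y z -> D x z <= (D x y).+1 by move=> x y z _; rewrite /D; case: (x =P z); case: (x =P y).
have D2 : forall x z, 0 < D x z -> exists2 y, e y z & D x y < D x z.
  move=> x z; rewrite /D /e; case: (x =P z) => // ne _; exists x; [by apply/eqP | by rewrite eqxx].
have Dlt : forall x y, D x y < #|T| by move=> x y; rewrite card_ord /D; case: (x =P y).
have [Hc Hd] := D_facts D0 D1 D2 Dlt.
have Hd0 : forall x y, (dist e x y == 0) = (x == y) by move=> x y; rewrite Hd.
have cT : #|T| = n.+3 by rewrite card_ord.
exists T, e; split; [|split; [exact: Hc|split]].
- split; first by move=> x y; rewrite /e eq_sym.
  by move=> x; rewrite /e eqxx.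
- split.
    by exists setT; split; [exact: setT_WTR | rewrite cardsT].
  move=> W HW; suff : #|[set: T]| <= #|W| by rewrite cardsT cT.
  apply: subset_leq_card.
  apply: (twins_sub (C := setT) _ _ HW).
    by move=> c c' y _ _ yc yc'; rewrite !Hd /D eq_sym yc eq_sym yc'.
  move=> c _; case: (c =P ord0) => [->|ne].
    by exists ord_max.
  by exists ord0; rewrite ?inE //; apply/eqP=> h; apply: ne.
- suff : wt_res_eq e #|T| by rewrite cT.
  apply: (@res_twins _ _ ord0 ord_max) => //.
  by move=> y y0 ym; rewrite !Hd /D eq_sym y0 eq_sym ym.
Qed.

Section S.
Variables n m : nat.
Definition BT := ('I_n.+2 + 'I_m.+2)%type.
Definition lvl (x : BT) : nat := match x with inl _ => 0 | inr j => j.+1 end.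
Definition eB (x y : BT) : bool := match x, y with
 | inl _, inr j => (j == 0 :> nat)
 | inr j, inl _ => (j == 0 :> nat)
 | inr i, inr j => (i.+1 == j :> nat) || (j.+1 == i :> nat)
 | _, _ => false end.
Definition DB (x y : BT) : nat := match x, y with
 | inl i, inl j => if (i == j :> nat) then 0 else 2
 | _, _ => (lvl x - lvl y) + (lvl y - lvl x) end.

Lemma DB0 x y : (DB x y == 0) = (x == y).
Proof.
case: x => i; case: y => j /=.
- rewrite (inj_eq inl_inj); case: (i =P j) => [->|ne]; first by rewrite eqxx.
  case: (i == j :> nat) / eqP => // h; case: ne; exact: val_inj.
- by case: i => [i ?]; rewrite /= subn0.
- by case: j => [j ?]; rewrite /= sub0n.
- rewrite (inj_eq inr_inj); apply/eqP/eqP => [h|->]; last lia.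
  apply: val_inj => /=; lia.
Qed.
Lemma DB1 x y z : eB y z -> DB x z <= (DB x y).+1.
Proof.
case: x => i; case: y => j; case: z => l //=; repeat (case: ifP => ?); move=> *; lia.
Qed.

Lemma DBlt x y : DB x y < #|{: BT}|.
Proof.
rewrite card_sum !card_ord.
case: x => [i|i]; case: y => [j|j] /=; try (case: ifP => ?); have := ltn_ord i; have := ltn_ord j; lia.
Qed.

Lemma DB2 x z : 0 < DB x z -> exists2 y, eB y z & DB x y < DB x z.
Proof.
case: z => [l|l] H.
  exists (inr ord0); first by [].
  move: H; case: x => [i|i] /=; try (case: ifP => ?); have := ltn_ord i; lia.
case: (ltngtP (lvl x) l.+1) => Hx.
- case: l H Hx => [[|l] Hl] H Hx.
  + case: x H Hx => [i|i] //= H Hx; first by exists (inl i) => //=; rewrite eqxx.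
  + have Hl' : l < m.+2 by lia.
    exists (inr (Ordinal Hl')) => /=; first by rewrite eqxx.
    move: H; case: x Hx => [i|i] /= Hx; lia.
- case: x H Hx => [i|i] //= H Hx.
  have Hl' : l.+1 < m.+2 by have := ltn_ord i; lia.
  exists (inr (Ordinal Hl')) => /=; first by rewrite eqxx orbT.
  lia.
- case: x H Hx => [i|i] //= H Hx.
  have e : i = l by apply: val_inj => /=; lia.
  by subst; rewrite !subnn in H.
Qed.

End S.

Lemma broom_ok n m : exists (T : finType) (e : rel T),
  simple_graph e /\ connected_graph e /\ wt_dim_eq e n.+3 /\ wt_res_eq e (n.+2 + m.+2).
Proof.
pose T := BT n m.
pose e : rel T := @eB n m.
have [Hc Hd] := D_facts (@DB0 n m) (@DB1 n m) (@DB2 n m) (@DBlt n m).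
have Hd0 : forall x y, (dist e x y == 0) = (x == y) by move=> x y; rewrite Hd DB0.
pose C : {set T} := [set inl i | i : 'I_n.+2].
have inC : forall x : T, (x \in C) = (if x is inl _ then true else false).
  case=> [i|j]; first by rewrite imset_f.
  by apply/imsetP => -[i _].
have cC : #|C| = n.+2 by rewrite card_imset ?card_ord //; exact: inl_inj.
have Htw : forall c c' y, c \in C -> c' \in C -> y != c -> y != c' -> dist e c y = dist e c' y.
  move=> c c' y; rewrite !inC !Hd; case: c => // i _; case: c' => // i' _.
  case: y => [k|k] //= yc yc'.
  have h1 : (i == k :> nat) = false by apply/negP => /eqP h; move: yc; rewrite (val_inj h) eqxx.
  have h2 : (i' == k :> nat) = false by apply/negP => /eqP h; move: yc'; rewrite (val_inj h) eqxx.
  by rewrite h1 h2.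
have Hnt : forall c, c \in C -> exists2 c', c' \in C & c' != c.
  move=> c; rewrite inC; case: c => // i _.
  case: (i =P ord0) => [->|ne].
    by exists (inl ord_max); rewrite ?inC // (inj_eq inl_inj).
  exists (inl ord0); rewrite ?inC // (inj_eq inl_inj); apply/eqP => h; apply: ne; by rewrite h.
have Hne : forall y z, y != z -> dist e y y != dist e z y.
  move=> y z yz; have h1 := Hd0 y y; have h2 := Hd0 z y; rewrite eqxx in h1.
  by move/eqP: h1 => ->; rewrite eq_sym h2 eq_sym.
exists T, e; split; [|split; [exact: Hc|split]].
- split.
    by case=> [i|i]; case=> [j|j] //=; rewrite orbC.
  by case=> [i|i] //=; apply/negP => /orP[] /eqP; lia.
- split.
  + pose W0 : {set T} := inr ord_max |: C.
    have inW0 : forall x : T, (x \in W0) = (if x is inr j then (j == m.+1 :> nat) else true).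
      case=> [i|j]; rewrite !inE inC ?orbT //= orbF.
      by rewrite (inj_eq inr_inj).
    exists W0; split; last by rewrite cardsU1 cC inC.
    split.
    * move=> y z yz.
      case: (boolP (y \in W0)) => yW.
        by exists y => //; apply: Hne.
      case: (boolP (z \in W0)) => zW.
        by exists z => //; rewrite eq_sym; apply: Hne; rewrite eq_sym.
      exists (inr ord_max); first by rewrite inW0 /=.
      move: yW zW yz; rewrite !inW0 !Hd; case: y => // j; case: z => // l /= jm lm jl.
      have : (j != l :> nat) by apply: contra jl => /eqP h; rewrite (val_inj h).
      have := ltn_ord j; have := ltn_ord l; lia.
    * move=> w x wW xW; rewrite inW0 in xW; rewrite inW0 in wW.
      case: x xW => // j jm.
      case: w wW => [i|l] wW.
        exists (inr ord_max); first by rewrite !inE /= eqxx.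
        rewrite !Hd /=; have := ltn_ord j; lia.
      exists (inl ord0); first by rewrite !inE inC.
      rewrite !Hd /=; have := ltn_ord j; lia.
  + move=> W HW.
    have CW := twins_sub Htw Hnt HW.
    case: (boolP (W \subset C)) => WC.
      have h0 : (inl ord0 : T) \in W by apply: (subsetP CW); rewrite inC.
      have h1 : 1 < m.+2 by [].
      have h1W : (inr (Ordinal h1) : T) \notin W by apply/negP => /(subsetP WC); rewrite inC.
      have [w' ] := HW.2 _ _ h0 h1W.
      rewrite !inE => /andP[w'0 w'W]; have := subsetP WC _ w'W; rewrite inC.
      case: w' w'0 {w'W} => // i; rewrite (inj_eq inl_inj) => i0 _.
      rewrite !Hd /=; case: ifP => // /eqP h; case/eqP: i0; exact: val_inj.
    case/subsetPn: WC => y yW yC.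
    suff : #|y |: C| <= #|W| by rewrite cardsU1 yC cC.
    by apply: subset_leq_card; rewrite subUset sub1set yW CW.
- suff : wt_res_eq e #|{: BT n m}| by rewrite card_sum !card_ord.
  apply: (@res_twins _ _ (inl ord0) (inl ord_max)) => //.
  move=> y y1 y2; apply: Htw; by rewrite ?inC.
Qed.

Theorem theorem8 (a b : nat) :
  3 <= a -> a <= b ->
  exists (T : finType) (e : rel T),
    simple_graph e /\ connected_graph e /\ wt_dim_eq e a /\ wt_res_eq e b.
Proof.
move=> ha hab.
case: (ltngtP a b) => h; last 1 first.
- subst b; have -> : a = (a - 3).+3 by lia. exact: complete_ok.
- have [T [e H]] := broom_ok (a - 3) (b - a - 1).
  exists T, e; have -> : a = (a - 3).+3 by lia.
  by have -> : b = (a - 3).+2 + (b - a - 1).+2 by lia.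
- lia.
Qed.
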